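(* For integers $n\ge1$, $0\le l\le n-1$, and $c\in\mathbb{C}\setminus\{0\}$, $$\sum_{\substack{l_1+\cdots+l_n=l\\ l_i\ge0}}\binom{l}{l_1,\ldots,l_n}\prod_{i=1}^n b_{l_i}(c)=B_l^{(l-n+1)}(cn+1).$$
   Context: The Bernoulli polynomials of the second kind are defined by $\frac{t(1+t)^x}{\log(1+t)}=\sum_{l\ge0}b_l(x)\frac{t^l}{l!}$. The Bernoulli polynomials of order $a$ are defined by $\left(\frac{t}{e^t-1}\right)^a e^{xt}=\sum_{n\ge0}B_n^{(a)}(x)\frac{t^n}{n!}$. $\binom{l}{l_1,\ldots,l_n}$ is the multinomial coefficient. *)

(* Defs.v *)
(* Formal power series are represented by their coefficient
   sequences nat -> R over a field R of characteristic 0 (we work over an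
   arbitrary numClosedFieldType, which generalises C). *)
From HB Require Import structures.
From mathcomp Require Import all_boot all_order all_algebra.
Set Implicit Arguments. Unset Strict Implicit. Unset Printing Implicit Defensive.
Import Order.TTheory GRing.Theory Num.Theory.
Local Open Scope ring_scope.

Section FPS.
Variable R : fieldType.

Definition fmul (f g : nat -> R) : nat -> R :=
  fun n => \sum_(i < n.+1) f i * g (n - i)%N.

Definition fone : nat -> R := fun n => (n == 0%N)%:R.

Definition fpow (f : nat -> R) (k : nat) : nat -> R := iter k (fmul f) fone.

Fixpoint finv_seq (f : nat -> R) (n : nat) : seq R :=
  match n with
  | 0 => [:: (f 0%N)^-1]
  | m.+1 => let s := finv_seq f m in
      rcons s (- (f 0%N)^-1 * \sum_(k < m.+1) f k.+1 * nth 0 s (m - k)%N)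
  end.

Definition finv (f : nat -> R) : nat -> R := fun n => nth 0 (finv_seq f n) n.

Definition gbinom (x : R) (k : nat) : R :=
  (\prod_(i < k) (x - i%:R)) / (k`!)%:R.

Definition log1p_over_t : nat -> R := fun k => (-1) ^+ k / (k.+1)%:R.
Definition binom_series (x : R) : nat -> R := fun k => gbinom x k.
Definition expm1_over_t : nat -> R := fun k => 1 / ((k.+1)`!)%:R.
Definition exp_series (x : R) : nat -> R := fun k => x ^+ k / (k`!)%:R.

(* Bernoulli polynomials of the second kind:
   t (1+t)^x / log(1+t) = sum_l b_l(x) t^l / l! *)
Definition bern2 (l : nat) (x : R) : R :=
  (l`!)%:R * fmul (finv log1p_over_t) (binom_series x) l.

(* (t/(e^t-1))^a for integer a *)
Definition tdiv_pow (a : int) : nat -> R :=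
  match a with
  | Posz k => fpow (finv expm1_over_t) k
  | Negz k => fpow expm1_over_t k.+1
  end.

(* Bernoulli polynomials of order a:
   (t/(e^t-1))^a e^{xt} = sum_m B_m^{(a)}(x) t^m/m! *)
Definition bernoulli_ord (a : int) (m : nat) (x : R) : R :=
  (m`!)%:R * fmul (tdiv_pow a) (exp_series x) m.

End FPS.

Definition multinom (n l : nat) (L : {ffun 'I_n -> 'I_l.+1}) : nat :=
  (l`! %/ \prod_(i < n) (L i)`!)%N.

(* Main.v *)
Require Import Defs.
From HB Require Import structures.
From mathcomp Require Import all_boot all_order all_algebra.
From mathcomp Require Import boolp.
From mathcomp Require Import ring zify.
Import Order.TTheory GRing.Theory Num.Theory.
Local Open Scope ring_scope.

Set Implicit Arguments. Unset Strict Implicit. Unset Printing Implicit Defensive.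

Section FPSRing.
Variable R : fieldType.
Definition fps : Type := nat -> R.
HB.instance Definition _ := gen_eqMixin fps.
HB.instance Definition _ := gen_choiceMixin fps.

Definition fz : fps := fun _ => 0.
Definition fadd (f g : fps) : fps := fun k => f k + g k.
Definition fopp (f : fps) : fps := fun k => - f k.
Lemma faddA : associative fadd.
Proof. by move=> f g h; apply: funext => k; rewrite /fadd addrA. Qed.
Lemma faddC : commutative fadd.
Proof. by move=> f g; apply: funext => k; rewrite /fadd addrC. Qed.
Lemma fadd0 : left_id fz fadd.
Proof. by move=> f; apply: funext => k; rewrite /fadd add0r. Qed.
Lemma faddN : left_inverse fz fopp fadd.
Proof. by move=> f; apply: funext => k; rewrite /fadd /fopp addNr. Qed.
HB.instance Definition _ := GRing.isZmodule.Build fps faddA faddC fadd0 faddN.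

Definition P (N : nat) (f : fps) : {poly R} := \poly_(i < N.+1) f i.

Lemma bridge (f g : fps) N k : (k <= N)%N -> fmul f g k = (P N f * P N g)`_k.
Proof.
move=> kN; rewrite coefM /fmul; apply: eq_bigr => i _.
rewrite /P !coef_poly; have ik : (i <= k)%N by rewrite -ltnS.
rewrite ifT; last by rewrite ltnS (leq_trans ik kN).
by rewrite ifT // ltnS (leq_trans (leq_subr _ _) kN).
Qed.

Lemma coefM_agree (p q r : {poly R}) k :
  (forall i, (i <= k)%N -> p`_i = q`_i) -> (p * r)`_k = (q * r)`_k.
Proof.
move=> H; rewrite !coefM; apply: eq_bigr => i _; rewrite H //.
by rewrite -ltnS.
Qed.

Lemma P_fmul f g N i : (i <= N)%N -> (P N (fmul f g))`_i = (P N f * P N g)`_i.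
Proof. by move=> iN; rewrite /P coef_poly ltnS iN (bridge _ _ iN). Qed.

Lemma fmulA : associative (@fmul R).
Proof.
move=> f g h; apply: funext => k.
rewrite (bridge _ _ (leqnn k)) [in RHS](bridge _ _ (leqnn k)).
rewrite (coefM_agree _ (fun i ik => P_fmul f g ik)).
rewrite mulrC (coefM_agree _ (fun i ik => P_fmul g h ik)).
by rewrite mulrC mulrA.
Qed.

Lemma fmulC : commutative (@fmul R).
Proof.
move=> f g; apply: funext => k.
by rewrite (bridge _ _ (leqnn k)) [in RHS](bridge _ _ (leqnn k)) mulrC.
Qed.

Lemma fmul1 : left_id (@fone R) (@fmul R).
Proof.
move=> f; apply: funext => k; rewrite /fmul big_ord_recl /= /fone eqxx mul1r.
rewrite big1 ?addr0 ?subn0 // => i _; by rewrite mul0r.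
Qed.

Lemma fmulDl : left_distributive (@fmul R) fadd.
Proof.
move=> f g h; apply: funext => k; rewrite /fmul /fadd -big_split /=.
by apply: eq_bigr => i _; rewrite mulrDl.
Qed.

Lemma fone_neq0 : (@fone R : fps) != 0.
Proof.
apply/eqP => /(congr1 (fun f : fps => f 0%N)); rewrite /fone eqxx /=.
by move/eqP; rewrite oner_eq0.
Qed.

HB.instance Definition _ := GRing.Zmodule_isComNzRing.Build fps fmulA fmulC fmul1 fmulDl fone_neq0.

Lemma fpowE (f : fps) k : fpow f k = f ^+ k.
Proof. elim: k => [|k IH] //=; by rewrite exprS -IH. Qed.

End FPSRing.

Section Basic.
Variable R : numFieldType.
Local Notation fps := (fps R).
Implicit Types f g h : fps.

Lemma fE_add f g k : (f + g) k = f k + g k. Proof. by []. Qed.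
Lemma fE_opp f k : (- f) k = - f k. Proof. by []. Qed.
Lemma fE_sub f g k : (f - g) k = f k - g k. Proof. by []. Qed.
Lemma fE_mul f g k : (f * g) k = \sum_(i < k.+1) f i * g (k - i)%N. Proof. by []. Qed.
Lemma fE_1 k : (1 : fps) k = (k == 0%N)%:R. Proof. by []. Qed.
Lemma fE_0 k : (0 : fps) k = 0. Proof. by []. Qed.

Lemma bridgeM f g N k : (k <= N)%N -> (f * g) k = (P N f * P N g)`_k.
Proof. exact: bridge. Qed.

Lemma coefM_agree2 (p q r : {poly R}) k :
  (forall i, (i <= k)%N -> p`_i = q`_i) -> (r * p)`_k = (r * q)`_k.
Proof. by move=> H; rewrite mulrC (coefM_agree _ H) mulrC. Qed.

Lemma P_agree f N M i : (i <= N)%N -> (i <= M)%N -> (P N f)`_i = (P M f)`_i.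
Proof. by move=> h1 h2; rewrite /P !coef_poly !ltnS h1 h2. Qed.

Definition fC (a : R) : fps := fun k => if k == 0%N then a else 0.
Lemma fC_mul a f k : (fC a * f) k = a * f k.
Proof.
rewrite fE_mul big_ord_recl /= subn0 /fC /= big1 ?addr0 // => i _.
by rewrite /bump /= mul0r.
Qed.
Lemma fCD a b : fC (a + b) = fC a + fC b.
Proof. apply: funext => k; rewrite fE_add /fC; case: (k == 0%N) => //; by rewrite addr0. Qed.
Lemma fCM a b : fC (a * b) = fC a * fC b.
Proof. apply: funext => k; rewrite fC_mul /fC; case: (k == 0%N) => //; by rewrite mulr0. Qed.
Lemma fC1 : fC 1 = 1.
Proof. by apply: funext => k; rewrite fE_1 /fC; case: (k == 0%N). Qed.
Lemma fCN a : fC (- a) = - fC a.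
Proof. apply: funext => k; rewrite fE_opp /fC; case: (k == 0%N) => //; by rewrite oppr0. Qed.
Lemma fCn n : fC n%:R = n%:R.
Proof. elim: n => [|n IH]; first by apply: funext => k; rewrite /fC; case: (k==0%N).
by rewrite -addn1 !natrD fCD IH fC1. Qed.
Lemma fC0 : fC 0 = 0.
Proof. by apply: funext => k; rewrite /fC; case: (k==0%N). Qed.

Definition fX : fps := fun k => (k == 1%N)%:R.
Lemma fX_mul0 f : (fX * f) 0%N = 0.
Proof. by rewrite fE_mul big_ord1 /fX /= mul0r. Qed.
Lemma fX_mulS f k : (fX * f) k.+1 = f k.
Proof.
rewrite fE_mul big_ord_recl big_ord_recl /= {1}/fX /= mul0r add0r.
rewrite /fX /= mul1r big1 ?addr0 ?subSS ?subn0 // => i _.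
by rewrite /bump /= mul0r.
Qed.

Definition D f : fps := fun k => k.+1%:R * f k.+1.
Lemma D_add f g : D (f + g) = D f + D g.
Proof. by apply: funext => k; rewrite /D fE_add mulrDr. Qed.
Lemma D_opp f : D (- f) = - D f.
Proof. by apply: funext => k; rewrite /D fE_opp mulrN. Qed.
Lemma D_sub f g : D (f - g) = D f - D g.
Proof. by rewrite D_add D_opp. Qed.
Lemma D_C a : D (fC a) = 0.
Proof. by apply: funext => k; rewrite /D /fC /= mulr0. Qed.
Lemma D_1 : D 1 = 0.
Proof. by rewrite -fC1 D_C. Qed.
Lemma D_X : D fX = 1.
Proof. by apply: funext => k; rewrite /D /fX fE_1; case: k => [|k] /=; rewrite ?mulr1 ?mulr0. Qed.

Lemma P_D f N i : (i <= N)%N -> (P N.+1 f)^`()`_i = (P N (D f))`_i.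
Proof.
move=> iN; rewrite coef_deriv /P !coef_poly !ltnS iN.
by rewrite /D mulr_natl.
Qed.

Lemma D_mul f g : D (f * g) = D f * g + f * D g.
Proof.
apply: funext => k; rewrite fE_add.
rewrite {1}/D (bridgeM _ _ (leqnn k.+1)).
have -> : k.+1%:R * (P k.+1 f * P k.+1 g)`_k.+1 = ((P k.+1 f * P k.+1 g)^`())`_k.
  by rewrite coef_deriv mulr_natl.
rewrite derivM coefD.
rewrite (bridgeM _ _ (leqnn k)) [X in _ = _ + X](bridgeM _ _ (leqnn k)).
congr (_ + _).
- rewrite (coefM_agree _ (fun i ik => P_D f ik)).
  by apply: coefM_agree2 => i ik; apply: P_agree => //; apply: leqW.
- rewrite (coefM_agree2 _ (fun i ik => P_D g ik)).
  by apply: coefM_agree => i ik; apply: P_agree => //; apply: leqW.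
Qed.

Lemma D_exp f n : D (f ^+ n.+1) = n.+1%:R * f ^+ n * D f.
Proof.
elim: n => [|n IH]; first by rewrite expr1 expr0 mulr1 mul1r.
rewrite exprS D_mul IH exprS (natrD _ 1 n.+1). move: (f ^+ n) (n.+1%:R : fps) => y c; ring.
Qed.

Lemma fXD f k : (fX * D f) k = k%:R * f k.
Proof. by case: k => [|k]; rewrite ?fX_mul0 ?mul0r // fX_mulS /D. Qed.

Lemma fn_mul n f k : (n%:R * f) k = n%:R * f k.
Proof. by rewrite -fCn fC_mul. Qed.

End Basic.
Arguments fX {R}.

Local Notation finv := Defs.finv.
Section Series.
Variable R : numFieldType.
Local Notation fps := (fps R).
Implicit Types (f : nat -> R) (g h : fps) (x y : R).

Lemma finv_seq_size f n : size (finv_seq f n) = n.+1.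
Proof. by elim: n => [|n IH] //=; rewrite size_rcons IH. Qed.

Lemma finv_seq_nth f n i : (i <= n)%N -> nth 0 (finv_seq f n) i = finv f i.
Proof.
elim: n => [|n IH]; first by rewrite leqn0 => /eqP ->.
rewrite leq_eqVlt => /orP [/eqP -> //| ]; rewrite ltnS => iN.
by rewrite /= nth_rcons finv_seq_size ltnS iN IH.
Qed.

Lemma finvS f m : finv f m.+1 = - (f 0%N)^-1 * \sum_(k < m.+1) f k.+1 * finv f (m - k)%N.
Proof.
rewrite /finv /= nth_rcons finv_seq_size ltnn eqxx; congr (_ * _).
apply: eq_bigr => k _; by rewrite finv_seq_nth // leq_subr.
Qed.

Lemma finv0 f : finv f 0 = (f 0%N)^-1.
Proof. by []. Qed.

Lemma mul_finv f : f 0%N != 0 -> (f : fps) * (finv f : fps) = 1.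
Proof.
move=> f0; apply: funext => -[|m].
  by rewrite fE_mul big_ord1 fE_1 /= finv0 mulfV.
rewrite fE_mul big_ord_recl fE_1 /= subn0 finvS.
under eq_bigr => i _ do rewrite /bump /= subSS.
by rewrite mulrA mulrN mulfV // mulN1r addNr.
Qed.

Definition lam : fps := @log1p_over_t R.
Definition psi : fps := finv lam.

Lemma lam0 : lam 0%N = 1.
Proof. by rewrite /lam /log1p_over_t expr0 divr1. Qed.

Lemma lam_psi : lam * psi = 1.
Proof. by apply: mul_finv; rewrite lam0 oner_neq0. Qed.

Lemma psi0 : psi 0%N = 1.
Proof. by rewrite /psi finv0 -/lam lam0 invr1. Qed.

Lemma onepX_mul g k : ((1 + fX) * g) k.+1 = g k.+1 + g k.
Proof. by rewrite mulrDl mul1r fE_add fX_mulS. Qed.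
Lemma onepX_mul0 g : ((1 + fX) * g) 0%N = g 0%N.
Proof. by rewrite mulrDl mul1r fE_add fX_mul0 addr0. Qed.

Lemma lam_eq : (1 + fX) * (lam + fX * D lam) = 1.
Proof.
have E k : (lam + fX * D lam) k = (-1) ^+ k.
  rewrite fE_add fXD /lam /log1p_over_t.
  have h : k.+1%:R != 0 :> R by rewrite pnatr_eq0.
  move: h; move: ((-1) ^+ k) => s h; field; by rewrite addrC natr1.
apply: funext => -[|k]; first by rewrite onepX_mul0 E fE_1.
by rewrite onepX_mul !E fE_1 exprS mulN1r addNr.
Qed.

Lemma keyK : psi ^+ 2 = (1 + fX) * (psi - fX * D psi).
Proof.
have e1 : lam * psi - 1 = 0 by rewrite lam_psi subrr.
have e2 : D lam * psi + lam * D psi = 0 by rewrite -D_mul lam_psi D_1.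
have e3 : (1 + fX) * (lam + fX * D lam) - 1 = 0 by rewrite lam_eq subrr.
apply/eqP; rewrite -subr_eq0; apply/eqP.
have -> : psi ^+ 2 - (1 + fX) * (psi - fX * D psi) =
  - psi ^+ 2 * ((1 + fX) * (lam + fX * D lam) - 1) +
  (1 + fX) * (psi * (lam * psi - 1) + fX * psi * (D lam * psi + lam * D psi)
     - fX * D psi * (lam * psi - 1)) by ring.
by rewrite e1 e2 e3; ring.
Qed.

Definition B (x : R) : fps := binom_series x.

Lemma gbinom0 x : gbinom x 0 = 1.
Proof. by rewrite /gbinom big_ord0 divr1. Qed.

Lemma fact_neq0 k : (k`!)%:R != 0 :> R.
Proof. by rewrite pnatr_eq0 -lt0n fact_gt0. Qed.

Lemma natS_neq0 k : 1 + k%:R != 0 :> R.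
Proof. by rewrite addrC natr1 pnatr_eq0. Qed.

Lemma gbinomS x k : k.+1%:R * gbinom x k.+1 = (x - k%:R) * gbinom x k.
Proof.
rewrite /gbinom big_ord_recr /= factS natrM invfM.
have h := fact_neq0 k; have h2 : k.+1%:R != 0 :> R by rewrite pnatr_eq0.
field; by rewrite h natS_neq0.
Qed.

Lemma gbinomD x k : k.+1%:R * gbinom x k.+1 = x * gbinom (x - 1) k.
Proof.
rewrite /gbinom big_ord_recl /= subr0 factS natrM invfM.
under eq_bigr => i _ do rewrite /bump /= -natr1 opprD addrA addrAC.
have h := fact_neq0 k; have h2 : k.+1%:R != 0 :> R by rewrite pnatr_eq0.
field; by rewrite h natS_neq0.
Qed.

Lemma B0 x : B x 0%N = 1.
Proof. exact: gbinom0. Qed.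

Lemma B_ode x : (1 + fX) * D (B x) = fC x * B x.
Proof.
apply: funext => k; rewrite fC_mul.
case: k => [|k]. by have h := gbinomS x 0; rewrite mulr1n subr0 in h; rewrite onepX_mul0 /D /B /binom_series h.
rewrite onepX_mul /D /B /binom_series (gbinomS x k.+1).
idtac.
ring.
Qed.

Lemma natSn0 k : k.+1%:R != 0 :> R.
Proof. by rewrite pnatr_eq0. Qed.

Lemma B_uniq x g : g 0%N = 1 -> (1 + fX) * D g = fC x * g -> g = B x.
Proof.
move=> g0 H; apply: funext; elim => [|k IH]; first by rewrite g0 B0.
have Hk := congr1 (fun f : fps => f k) H; rewrite /= fC_mul in Hk.
apply: (mulfI (natSn0 k)); rewrite /B /binom_series gbinomS.
case: k IH Hk => [|k] IH.
  rewrite onepX_mul0 /D => Hk; by rewrite Hk g0 gbinom0 subr0.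
rewrite onepX_mul /D /B /binom_series in IH * => Hk.
have -> : k.+2%:R * g k.+2 = x * g k.+1 - k.+1%:R * g k.+1.
  by rewrite -Hk addrK.
by rewrite -IH mulrBl.
Qed.

Lemma BM x y : B x * B y = B (x + y).
Proof.
apply: B_uniq; first by rewrite fE_mul big_ord1 !B0 mulr1.
rewrite D_mul fCD mulrDr.
have h1 := B_ode x; have h2 := B_ode y.
have -> : (1 + fX) * (D (B x) * B y) = ((1 + fX) * D (B x)) * B y by ring.
have -> : (1 + fX) * (B x * D (B y)) = ((1 + fX) * D (B y)) * B x by ring.
rewrite h1 h2; ring.
Qed.

Lemma B1 : B 1 = 1 + fX.
Proof.
symmetry; apply: B_uniq.
  by rewrite fE_add fE_1 /fX /= addr0.
by rewrite D_add D_1 D_X add0r mulr1 fC1 mul1r.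
Qed.

Lemma B_succ x : B (x + 1) = (1 + fX) * B x.
Proof. by rewrite -BM B1 mulrC. Qed.

Lemma B_D x : D (B (x + 1)) = fC (x + 1) * B x.
Proof.
apply: funext => k; rewrite fC_mul /D /B /binom_series gbinomD.
by rewrite addrK.
Qed.

Lemma B_pow x n : B x ^+ n = B (x * n%:R).
Proof.
elim: n => [|n IH].
  rewrite expr0 mulr0; apply: B_uniq; first by [].
  by rewrite D_1 fC0 mulr0 mul0r.
by rewrite exprS IH BM -natr1 mulrDr mulr1 addrC.
Qed.

Definition ex (y : R) : fps := exp_series y.
Definition E : fps := @expm1_over_t R.

Lemma ex0 y : ex y 0%N = 1.
Proof. by rewrite /ex /exp_series expr0 divr1. Qed.

Lemma exS y k : k.+1%:R * ex y k.+1 = y * ex y k.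
Proof.
rewrite /ex /exp_series factS natrM invfM exprS.
have h := fact_neq0 k.
field; by rewrite h natS_neq0.
Qed.

Lemma ex_ode y : D (ex y) = fC y * ex y.
Proof. by apply: funext => k; rewrite fC_mul /D exS. Qed.

Lemma ex_uniq y g : g 0%N = 1 -> D g = fC y * g -> g = ex y.
Proof.
move=> g0 H; apply: funext; elim => [|k IH]; first by rewrite g0 ex0.
have Hk := congr1 (fun f : fps => f k) H; rewrite /= fC_mul /D in Hk.
apply: (mulfI (natSn0 k)); by rewrite exS Hk IH.
Qed.

Lemma exM a b : ex a * ex b = ex (a + b).
Proof.
apply: ex_uniq; first by rewrite fE_mul big_ord1 !ex0 mulr1.
by rewrite D_mul !ex_ode fCD; ring.
Qed.

Lemma ex1E : ex 1 - 1 = fX * E.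
Proof.
apply: funext => -[|k].
  by rewrite fE_sub fE_1 ex0 fX_mul0 subrr.
by rewrite fE_sub fE_1 fX_mulS subr0 /ex /exp_series /E /expm1_over_t expr1n.
Qed.

End Series.

Section Main.
Variable R : numFieldType.
Local Notation fps := (fps R).
Local Notation psi := (psi R).
Local Notation E := (E R).
Implicit Types (g h : fps) (x y : R).

Lemma identI j x :
  fX * D (psi ^+ j.+1 * B (x + 1)) =
  j.+1%:R * (psi ^+ j.+1 * B (x + 1) - psi ^+ j.+2 * B x) + fC (x + 1) * (fX * (psi ^+ j.+1 * B x)).
Proof.
rewrite D_mul D_exp B_D B_succ -addn2 exprD keyK exprSr.
move: (psi ^+ j) (D psi) (B x) (fC (x + 1)) => p d b c.
ring.
Qed.

Lemma base n x : (psi ^+ n.+1 * B x) n = (x + 1) ^+ n / (n`!)%:R.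
Proof.
elim: n x => [|j IH] x.
  by rewrite expr1 fE_mul big_ord1 psi0 B0 mul1r expr0 divr1.
have H := congr1 (fun f : fps => f j.+1) (identI j x); move: H => /=.
rewrite fXD fE_add fn_mul fE_sub fC_mul fX_mulS IH.
move=> H.
have h1 := natSn0 R j; have h2 := fact_neq0 R j.
apply: (mulfI h1).
have -> : j.+1%:R * (psi ^+ j.+2 * B x) j.+1 = (x + 1) * ((x + 1) ^+ j / (j`!)%:R).
  move: H; move: ((psi ^+ j.+1 * B (x + 1)) j.+1) (psi ^+ j.+2 * B x) => a b H.
  apply/eqP; rewrite -subr_eq0; apply/eqP. move/eqP: H; rewrite -subr_eq0 => /eqP H.
  rewrite -H; ring.
rewrite factS natrM exprS.
field; by rewrite h2 natS_neq0.
Qed.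

Lemma mainF m l x : (psi ^+ (l + 1 + m) * B x) l = (E ^+ m * ex (x + 1)) l.
Proof.
elim: m l x => [|m IH] l x.
  by rewrite addn0 addn1 base expr0 mul1r.
have -> : (l + 1 + m.+1 = l.+1 + 1 + m)%N by rewrite addnS !addSn.
set n := (l.+1 + 1 + m)%N.
have e1 : psi ^+ n * B (x + 1) - psi ^+ n * B x = fX * (psi ^+ n * B x).
  rewrite B_succ; move: (psi ^+ n) (B x) => p b; ring.
have e2 : E ^+ m * ex (x + 1 + 1) - E ^+ m * ex (x + 1) = fX * (E ^+ m.+1 * ex (x + 1)).
  rewrite -exM exprS.
  have -> : ex 1 = fX * E + 1 by rewrite -ex1E subrK.
  move: (E ^+ m) (ex (x + 1)) => p b; ring.
by rewrite -fX_mulS -e1 fE_sub !IH -fE_sub e2 fX_mulS.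
Qed.
End Main.

Section Fin.
Variable R : numFieldType.
Local Notation fps := (fps R).

Lemma pow_bridge (f : fps) n N k : (k <= N)%N -> (f ^+ n) k = ((P N f) ^+ n)`_k.
Proof.
elim: n k => [|n IH] k kN; first by rewrite !expr0 fE_1 coef1.
rewrite !exprS (bridgeM _ _ kN); apply: coefM_agree2 => i ik.
rewrite /P coef_poly ltnS (leq_trans ik kN) IH //; exact: leq_trans ik kN.
Qed.

Lemma prod_monom n (c : 'I_n -> R) (e : 'I_n -> nat) :
  \prod_(i < n) (c i *: 'X^(e i)) = (\prod_(i < n) c i) *: ('X^(\sum_(i < n) e i) : {poly R}).
Proof.
elim: n c e => [|n IH] c e; first by rewrite !big_ord0 scale1r.
rewrite !big_ord_recr /= IH exprD -scalerAl -scalerA -scalerAr; congr (_ *: _).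
Qed.

Lemma multinomial_fps (a : fps) n l :
  \sum_(L : {ffun 'I_n -> 'I_l.+1} | (\sum_(i < n) (L i : nat))%N == l) \prod_(i < n) a (L i)
  = (a ^+ n) l.
Proof.
rewrite (pow_bridge _ _ (leqnn l)) /P poly_def -[n in _ ^+ n]card_ord -prodr_const.
rewrite bigA_distr_bigA /= coef_sum big_mkcond /=; apply: eq_bigr => L _.
rewrite (prod_monom (fun i => a (L i)) (fun i => (L i : nat))).
rewrite coefZ coefXn [l == _]eq_sym; case: ifP => _; by rewrite ?mulr1 ?mulr0.
Qed.

End Fin.

Unset Implicit Arguments. Set Strict Implicit.

Lemma fact_prod_dvd n (F : 'I_n -> nat) :
  (\prod_(i < n) (F i)`! %| (\sum_(i < n) F i)`!)%N.
Proof.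
elim: n F => [|n IH] F; first by rewrite !big_ord0.
rewrite !big_ord_recr /=.
set S := (\sum_(i < n) F (widen_ord (leqnSn n) i))%N.
have -> : ((S + F ord_max)`! = 'C(S + F ord_max, S) * (S`! * (F ord_max)`!))%N.
  by rewrite -(bin_fact (leq_addr (F ord_max) S)) addKn.
apply: dvdn_mull; apply: dvdn_mul => //; exact: IH.
Qed.

Lemma multinom_fact n l (L : {ffun 'I_n -> 'I_l.+1}) :
  (\sum_(i < n) (L i : nat))%N = l ->
  (multinom L * \prod_(i < n) (L i)`!)%N = l`!.
Proof.
move=> Hs; rewrite /multinom divnK //.
by have := @fact_prod_dvd n (fun i => (L i : nat)); rewrite Hs.
Qed.

Theorem theorem7 (R : numClosedFieldType) (n l : nat) (c : R) :
  (1 <= n)%N -> (l <= n - 1)%N -> c != 0 ->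
  \sum_(L : {ffun 'I_n -> 'I_l.+1} | (\sum_(i < n) (L i : nat))%N == l)
      ((multinom L)%:R * \prod_(i < n) bern2 (L i) c)
  = bernoulli_ord (l%:Z - n%:Z + 1) l (c * n%:R + 1).
Proof.
move=> n1 ln _.
set m := (n - 1 - l)%N.
have Hn : n = (l + 1 + m)%N.
  rewrite /m; lia.
pose a : fps R := psi R * B c.
have Hb : forall k, bern2 k c = (k`!)%:R * a k by [].
under eq_bigr => L HL.
  rewrite (eq_bigr (fun i => ((L i)`!)%:R * a (L i))); last by move=> i _; exact: Hb.
  rewrite big_split /= mulrA -natr_prod -natrM multinom_fact; last exact/eqP.
  over.
rewrite -mulr_sumr multinomial_fps /a exprMn B_pow.
rewrite [X in psi R ^+ X]Hn mainF.
rewrite /bernoulli_ord.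
have -> : (l%:Z - n%:Z + 1 = - m%:Z)%R.
  rewrite Hn !PoszD; ring.
congr (_ * _).
clear Hn; clearbody m; case: m => [|m'].
  by rewrite oppr0 /= expr0.
have -> : (- (m'.+1)%:Z = Negz m')%R by []. by rewrite -fpowE.
Qed.
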